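(* Let $\mathcal C$ be an $R$-coring satisfying the left $\alpha$-condition, and suppose $\mathcal C=\bigoplus_{i\in I}C_i$ as left $\mathcal C$-comodules with each $C_i$ finitely generated (as a left $R$-module). Then $\mathrm{Rat}^{\mathcal C}({}^*\mathcal C)$ is dense in ${}^*\mathcal C$ in the finite topology, and equivalently, $\mathrm{Rat}^{\mathcal C}$ is an exact functor.
   Context: An $R$-coring is a triple $(\mathcal C,\Delta,\varepsilon)$ with $\mathcal C$ an $R$-bimodule and $\Delta:\mathcal C\to\mathcal C\otimes_R\mathcal C$, $\varepsilon:\mathcal C\to R$ coassociative and counital $R$-bimodule maps; write $\Delta(c)=c_{(1)}\otimes_R c_{(2)}$. ${}^*\mathcal C={}_R\mathrm{Hom}(\mathcal C,R)$ is a ring with product $(f\#g)(c)=g(c_{(1)}f(c_{(2)}))$. $\mathcal C$ satisfies the left $\alpha$-condition if it is locally projective as a left $R$-module; then right $\mathcal C$-comodules form a full subcategory of right ${}^*\mathcal C$-modules (a comodule $N$, $n\mapsto n_{[0]}\otimes n_{[1]}$, acts by $n\cdot f=n_{[0]}f(n_{[1]})$). For a right ${}^*\mathcal C$-module $M$, $\mathrm{Rat}^{\mathcal C}(M)$ is the set of $m\in M$ for which there is $\sum_i m_i\otimes c_i\in M\otimes_R\mathcal C$ with $m\cdot f=\sum_i m_if(c_i)$ for all $f\in{}^*\mathcal C$; $\mathrm{Rat}^{\mathcal C}$ is a left exact functor from right ${}^*\mathcal C$-modules to right $\mathcal C$-comodules. Left $\mathcal C$-comodules are left $R$-modules with coassociative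 counital coactions $m\mapsto m_{[-1]}\otimes m_{[0]}\in\mathcal C\otimes_R M$. The finite topology on ${}^*\mathcal C$ has basic open sets $\{g\mid g(c)=f(c)\ \forall c\in F\}$, $F\subseteq\mathcal C$ finite. *)

(* Defs.v *)
From HB Require Import structures.
From mathcomp Require Import all_boot all_order all_algebra.
Set Implicit Arguments. Unset Strict Implicit. Unset Printing Implicit Defensive.
Import GRing.Theory.
Local Open Scope ring_scope.

Section Corings.
Variable R : nzRingType.

Definition lmod_ax (M : zmodType) (a : R -> M -> M) : Prop :=
  [/\ (forall r x y, a r (x + y) = a r x + a r y),
      (forall r s x, a (r + s) x = a r x + a s x),
      (forall r s x, a (r * s) x = a r (a s x)) &
      (forall x, a 1 x = x)].

Definition rmod_ax (M : zmodType) (b : M -> R -> M) : Prop :=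
  [/\ (forall x y r, b (x + y) r = b x r + b y r),
      (forall x r s, b x (r + s) = b x r + b x s),
      (forall x r s, b x (r * s) = b (b x r) s) &
      (forall x, b x 1 = x)].

Definition bimod_ax (M : zmodType) (a : R -> M -> M) (b : M -> R -> M) : Prop :=
  [/\ lmod_ax a, rmod_ax b & forall r x s, a r (b x s) = b (a r x) s].

Definition lmorph (M N : zmodType) (aM : R -> M -> M) (aN : R -> N -> N)
  (h : M -> N) : Prop :=
  (forall x y, h (x + y) = h x + h y) /\ (forall r x, h (aM r x) = aN r (h x)).

(* ---------- tensor products, via the universal property ----------
   A finite list s of pairs represents sum_{(m,n) in s} m (x) n in M (x)_R N.
   Two such lists represent the same tensor iff every R-balanced biadditive
   map into any abelian group takes the same value on them. *)
Definition balanced2 (M N A : zmodType) (bM : M -> R -> M) (aN : R -> N -> N)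
  (t : M -> N -> A) : Prop :=
  [/\ (forall x y n, t (x + y) n = t x n + t y n),
      (forall m x y, t m (x + y) = t m x + t m y) &
      (forall m r n, t (bM m r) n = t m (aN r n))].

Definition tens_eq (M N : zmodType) (bM : M -> R -> M) (aN : R -> N -> N)
  (s s' : seq (M * N)) : Prop :=
  forall (A : zmodType) (t : M -> N -> A), balanced2 bM aN t ->
    \sum_(p <- s) t p.1 p.2 = \sum_(p <- s') t p.1 p.2.

Definition balanced3 (C A : zmodType) (aC : R -> C -> C) (bC : C -> R -> C)
  (t : C -> C -> C -> A) : Prop :=
  [/\ (forall x x' y z, t (x + x') y z = t x y z + t x' y z),
      (forall x y y' z, t x (y + y') z = t x y z + t x y' z),
      (forall x y z z', t x y (z + z') = t x y z + t x y z'),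
      (forall x r y z, t (bC x r) y z = t x (aC r y) z) &
      (forall x y r z, t x (bC y r) z = t x y (aC r z))].

Definition tens3_eq (C : zmodType) (aC : R -> C -> C) (bC : C -> R -> C)
  (s s' : seq (C * C * C)) : Prop :=
  forall (A : zmodType) (t : C -> C -> C -> A), balanced3 aC bC t ->
    \sum_(p <- s) t p.1.1 p.1.2 p.2 = \sum_(p <- s') t p.1.1 p.1.2 p.2.

Variable C : zmodType.
(* left action, right action, comultiplication (Delta c is a list
   representing c_(1) (x) c_(2)), counit *)
Variables (lC : R -> C -> C) (rC : C -> R -> C)
          (Delta : C -> seq (C * C)) (eps : C -> R).

Definition is_coring : Prop :=
  [/\ bimod_ax lC rC,
      (* Delta is an R-bimodule map C -> C (x)_R C *)
      [/\ (forall c d, tens_eq rC lC (Delta (c + d)) (Delta c ++ Delta d)),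
          (forall r c, tens_eq rC lC (Delta (lC r c))
                                [seq (lC r p.1, p.2) | p <- Delta c]) &
          (forall c r, tens_eq rC lC (Delta (rC c r))
                                [seq (p.1, rC p.2 r) | p <- Delta c])],
      [/\ (forall c d, eps (c + d) = eps c + eps d),
          (forall r c, eps (lC r c) = r * eps c) &
          (forall c r, eps (rC c r) = eps c * r)],
      (forall c, tens3_eq lC rC
          [seq (q.1, q.2, p.2) | p <- Delta c, q <- Delta p.1]
          [seq (p.1, q.1, q.2) | p <- Delta c, q <- Delta p.2]) &
      (forall c, \sum_(p <- Delta c) lC (eps p.1) p.2 = c /\
                 \sum_(p <- Delta c) rC p.1 (eps p.2) = c)].

(* left alpha-condition: C is locally projective as a left R-module
   (Zimmermann-Huisgen): for every epimorphism p : L -> N of left R-modules,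
   every g : C -> N and every finite subset F of C (equivalently the
   finitely generated submodule it spans) there is h : C -> L with
   p o h = g on F. *)
Definition loc_proj_left : Prop :=
  forall (L N : zmodType) (aL : R -> L -> L) (aN : R -> N -> N),
    lmod_ax aL -> lmod_ax aN ->
    forall p : L -> N, lmorph aL aN p -> (forall y, exists x, p x = y) ->
    forall g : C -> N, lmorph lC aN g ->
    forall F : seq C, exists h : C -> L,
      lmorph lC aL h /\ (forall x, x \in F -> p (h x) = g x).

Definition left_alpha_condition : Prop := loc_proj_left.

(* ---------- the ring *C = _R Hom(C, R) ---------- *)
Definition ldual (f : C -> R) : Prop :=
  (forall x y, f (x + y) = f x + f y) /\ (forall r x, f (lC r x) = r * f x).

Definition dmul (f g : C -> R) : C -> R :=
  fun c => \sum_(p <- Delta c) g (rC p.1 (f p.2)).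

Definition iota (r : R) : C -> R := fun c => eps c * r.

(* right *C-modules; only the values of act on elements of *C matter *)
Definition rdmod_ax (M : zmodType) (act : M -> (C -> R) -> M) : Prop :=
  [/\ (forall m m' f, ldual f -> act (m + m') f = act m f + act m' f),
      (forall m f g, ldual f -> ldual g ->
                     act m (fun c => f c + g c) = act m f + act m g),
      (forall m f g, ldual f -> ldual g -> act m (dmul f g) = act (act m f) g) &
      (forall m, act m eps = m)].

Definition dmorph (M N : zmodType) (aM : M -> (C -> R) -> M)
  (aN : N -> (C -> R) -> N) (h : M -> N) : Prop :=
  (forall x y, h (x + y) = h x + h y) /\
  (forall m f, ldual f -> h (aM m f) = aN (h m) f).

(* m in Rat^C(M): there is sum_k m_k (x) c_k in M (x)_R C with
   m . f = sum_k m_k f(c_k) for all f in *C; the right R-action on M is the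
   one induced by iota *)
Definition rat_el (M : zmodType) (act : M -> (C -> R) -> M) (m : M) : Prop :=
  exists n (ms : 'I_n -> M) (cs : 'I_n -> C),
    forall f, ldual f -> act m f = \sum_(k < n) act (ms k) (iota (f (cs k))).

(* Rat^C( *C ), *C regarded as a right module over itself *)
Definition rat_dual (g : C -> R) : Prop :=
  ldual g /\
  exists n (hs : 'I_n -> C -> R) (cs : 'I_n -> C),
    (forall k, ldual (hs k)) /\
    forall f, ldual f -> forall c,
      dmul g f c = \sum_(k < n) dmul (hs k) (iota (f (cs k))) c.

(* density of Rat^C( *C ) in *C for the finite topology *)
Definition rat_dense : Prop :=
  forall f, ldual f -> forall F : seq C,
    exists g, rat_dual g /\ (forall x, x \in F -> g x = f x).

(* Rat^C is exact: it sends exact sequences M1 -> M2 -> M3 of right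
   *C-modules to exact sequences (Rat^C u, Rat^C v are the restrictions;
   im (Rat u) <= ker (Rat v) is automatic, so only the other inclusion is
   stated). *)
Definition rat_exact : Prop :=
  forall (M1 M2 M3 : zmodType) (a1 : M1 -> (C -> R) -> M1)
         (a2 : M2 -> (C -> R) -> M2) (a3 : M3 -> (C -> R) -> M3),
    rdmod_ax a1 -> rdmod_ax a2 -> rdmod_ax a3 ->
    forall (u : M1 -> M2) (v : M2 -> M3), dmorph a1 a2 u -> dmorph a2 a3 v ->
    (forall y, v y = 0 <-> exists x, u x = y) ->
    forall y, rat_el a2 y -> v y = 0 -> exists x, rat_el a1 x /\ u x = y.

Definition lsubmod (D : C -> Prop) : Prop :=
  [/\ D 0, (forall x y, D x -> D y -> D (x + y)),
      (forall x, D x -> D (- x)) & (forall r x, D x -> D (lC r x))].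

(* D is a left subcomodule of C: Delta(D) lies in C (x)_R D
   (C (x)_R D -> C (x)_R C is injective since D is a direct summand) *)
Definition left_subcomod (D : C -> Prop) : Prop :=
  lsubmod D /\
  forall d, D d -> exists n (xs ys : 'I_n -> C),
    (forall k, D (ys k)) /\
    tens_eq rC lC (Delta d) [seq (xs k, ys k) | k <- enum 'I_n].

Definition fg_left (D : C -> Prop) : Prop :=
  exists n (gs : 'I_n -> C), (forall k, D (gs k)) /\
    forall d, D d -> exists rs : 'I_n -> R, d = \sum_(k < n) lC (rs k) (gs k).

Definition direct_sum (I : Type) (D : I -> C -> Prop) : Prop :=
  (forall c, exists n (ix : 'I_n -> I) (xs : 'I_n -> C),
      (forall k, D (ix k) (xs k)) /\ c = \sum_(k < n) xs k) /\
  (forall i d n (ix : 'I_n -> I) (xs : 'I_n -> C),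
      (forall k, ix k <> i) -> (forall k, D (ix k) (xs k)) ->
      D i d -> d = \sum_(k < n) xs k -> d = 0).

End Corings.

(* Main.v *)
Require Import Defs.
From mathcomp Require Import all_boot all_order all_algebra.
From Stdlib Require Import ClassicalEpsilon FunctionalExtensionality.
From Stdlib Require List.
Set Implicit Arguments. Unset Strict Implicit. Unset Printing Implicit Defensive.
Import GRing.Theory.
Local Open Scope ring_scope.

Lemma add_sum (A B : zmodType) (phi : A -> B) :
  (forall x y, phi (x + y) = phi x + phi y) ->
  forall (T : Type) (r : seq T) (F : T -> A),
    phi (\sum_(i <- r) F i) = \sum_(i <- r) phi (F i).
Proof.
move=> H T r F.
have H0 : phi 0 = 0.
  by apply/(addrI (phi 0)); rewrite -H !addr0.
elim: r => [|a r IH]; first by rewrite !big_nil.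
by rewrite !big_cons H IH.
Qed.

Lemma add0 (A B : zmodType) (phi : A -> B) :
  (forall x y, phi (x + y) = phi x + phi y) -> phi 0 = 0.
Proof. by move=> H; apply/(addrI (phi 0)); rewrite -H !addr0. Qed.

Lemma addN (A B : zmodType) (phi : A -> B) :
  (forall x y, phi (x + y) = phi x + phi y) -> forall x, phi (- x) = - phi x.
Proof.
move=> H x; apply/(addrI (phi x)); rewrite -H !subrr; exact: add0.
Qed.

Section Coring.
Variables (R : nzRingType) (C : zmodType) (lC : R -> C -> C) (rC : C -> R -> C)
  (Delta : C -> seq (C * C)) (eps : C -> R).
Hypothesis HC : is_coring lC rC Delta eps.

Lemma lC_add r x y : lC r (x + y) = lC r x + lC r y.
Proof. by case: HC => [[[H _ _ _] _ _] _ _ _ _]; exact: H. Qed.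
Lemma lC_addl r s x : lC (r + s) x = lC r x + lC s x.
Proof. by case: HC => [[[_ H _ _] _ _] _ _ _ _]; exact: H. Qed.
Lemma lC_mul r s x : lC (r * s) x = lC r (lC s x).
Proof. by case: HC => [[[_ _ H _] _ _] _ _ _ _]; exact: H. Qed.
Lemma lC_1 x : lC 1 x = x.
Proof. by case: HC => [[[_ _ _ H] _ _] _ _ _ _]; exact: H. Qed.
Lemma rC_add x y r : rC (x + y) r = rC x r + rC y r.
Proof. by case: HC => [[_ [H _ _ _] _] _ _ _ _]; exact: H. Qed.
Lemma rC_addr x r s : rC x (r + s) = rC x r + rC x s.
Proof. by case: HC => [[_ [_ H _ _] _] _ _ _ _]; exact: H. Qed.
Lemma rC_mul x r s : rC x (r * s) = rC (rC x r) s.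
Proof. by case: HC => [[_ [_ _ H _] _] _ _ _ _]; exact: H. Qed.
Lemma lrC r x s : lC r (rC x s) = rC (lC r x) s.
Proof. by case: HC => [[_ _ H] _ _ _ _]; exact: H. Qed.
Lemma lmod_lC : lmod_ax lC.
Proof. by case: HC => [[H _ _] _ _ _ _]. Qed.

Lemma lC_0 r : lC r 0 = 0.
Proof. exact: (add0 (lC_add r)). Qed.
Lemma lC_N r x : lC r (- x) = - lC r x.
Proof. exact: (addN (lC_add r)). Qed.
Lemma lC_sum r (T : Type) (s : seq T) F :
  lC r (\sum_(i <- s) F i) = \sum_(i <- s) lC r (F i).
Proof. exact: (add_sum (lC_add r)). Qed.
Lemma rC_0 x : rC x 0 = 0.
Proof. exact: (add0 (rC_addr x)). Qed.

Lemma ld_add f : ldual lC f -> forall x y, f (x + y) = f x + f y.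
Proof. by case. Qed.
Lemma ld_lC f : ldual lC f -> forall r x, f (lC r x) = r * f x.
Proof. by case. Qed.
Lemma ld_0 f : ldual lC f -> f 0 = 0.
Proof. by move=> Hf; exact: (add0 (ld_add Hf)). Qed.
Lemma ld_sum f : ldual lC f -> forall (T : Type) (s : seq T) F,
  f (\sum_(i <- s) F i) = \sum_(i <- s) f (F i).
Proof. by move=> Hf; exact: (add_sum (ld_add Hf)). Qed.

Lemma Dsum_add (A : zmodType) (t : C -> C -> A) : balanced2 rC lC t ->
  forall c d, \sum_(p <- Delta (c + d)) t p.1 p.2 =
    \sum_(p <- Delta c) t p.1 p.2 + \sum_(p <- Delta d) t p.1 p.2.
Proof.
move=> Ht c d; case: HC => _ [Dadd _ _] _ _ _.
by rewrite (Dadd c d A t Ht) big_cat.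
Qed.

Lemma bal_dm (f g : C -> R) : ldual lC f -> (forall x y, g (x + y) = g x + g y) ->
  balanced2 rC lC (fun a b => g (rC a (f b))).
Proof.
move=> Hf Hg; split.
- by move=> x y n; rewrite rC_add Hg.
- by move=> m x y; rewrite (ld_add Hf) rC_addr Hg.
- by move=> m r n; rewrite (ld_lC Hf) rC_mul.
Qed.

Lemma dmul_add f g : ldual lC f -> (forall x y, g (x + y) = g x + g y) ->
  forall c d, dmul rC Delta f g (c + d) = dmul rC Delta f g c + dmul rC Delta f g d.
Proof. by move=> Hf Hg c d; rewrite /dmul (Dsum_add (bal_dm Hf Hg)). Qed.

Lemma dmul_0 f g : ldual lC f -> (forall x y, g (x + y) = g x + g y) ->
  dmul rC Delta f g 0 = 0.
Proof. by move=> Hf Hg; exact: (add0 (dmul_add Hf Hg)). Qed.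

Lemma dmul_sum f g : ldual lC f -> (forall x y, g (x + y) = g x + g y) ->
  forall (T : Type) (s : seq T) F,
  dmul rC Delta f g (\sum_(i <- s) F i) = \sum_(i <- s) dmul rC Delta f g (F i).
Proof. by move=> Hf Hg; exact: (add_sum (dmul_add Hf Hg)). Qed.

Lemma dmul_tens f g : ldual lC f -> (forall x y, g (x + y) = g x + g y) ->
  forall d s, tens_eq rC lC (Delta d) s ->
  dmul rC Delta f g d = \sum_(p <- s) g (rC p.1 (f p.2)).
Proof. by move=> Hf Hg d s Hs; rewrite /dmul (Hs _ _ (bal_dm Hf Hg)). Qed.

Lemma dmul_lC f g : ldual lC f -> ldual lC g ->
  forall r c, dmul rC Delta f g (lC r c) = r * dmul rC Delta f g c.
Proof.
move=> Hf Hg r c; case: HC => _ [_ DlC _] _ _ _.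
rewrite /dmul (DlC r c _ _ (bal_dm Hf (ld_add Hg))) big_map mulr_sumr.
by apply: eq_bigr => p _ /=; rewrite -lrC (ld_lC Hg).
Qed.

Lemma dmul_ldual f g : ldual lC f -> ldual lC g -> ldual lC (dmul rC Delta f g).
Proof. by move=> Hf Hg; split; [exact: dmul_add Hf (ld_add Hg)|exact: dmul_lC]. Qed.

Lemma eps_ldual : ldual lC eps.
Proof. by case: HC => _ _ [H1 H2 _] _ _; split. Qed.

Lemma iota_ldual r : ldual lC (Defs.iota eps r).
Proof.
rewrite /Defs.iota; split.
- by move=> x y; rewrite (ld_add eps_ldual) mulrDl.
- by move=> s x; rewrite (ld_lC eps_ldual) mulrA.
Qed.

Lemma dmul_iota h r : ldual lC h -> forall c, dmul rC Delta h (Defs.iota eps r) c = h c * r.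
Proof.
move=> Hh c; rewrite /dmul /Defs.iota -mulr_suml.
case: HC => _ _ [_ _ HrC] _ Hcu.
congr (_ * _).
have -> : \sum_(p <- Delta c) eps (rC p.1 (h p.2)) = \sum_(p <- Delta c) h (lC (eps p.1) p.2).
  by apply: eq_bigr => p _; rewrite HrC (ld_lC Hh).
by rewrite -(ld_sum Hh); case: (Hcu c) => ->.
Qed.

End Coring.

Lemma In_map (A B : Type) (f : A -> B) (y : B) (l : seq A) :
  List.In y (map f l) -> exists x, f x = y /\ List.In x l.
Proof.
elim: l => [|a l IH] //= [<-|H]; first by exists a; auto.
by case: (IH H) => x [? ?]; exists x; auto.
Qed.

Lemma In_filter (A : Type) (p : pred A) (y : A) (l : seq A) :
  List.In y (filter p l) -> List.In y l /\ p y.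
Proof.
elim: l => [|a l IH] //=; case: ifP => Hp /=.
- by case=> [<-|H]; [auto|case: (IH H); auto].
- by move=> H; case: (IH H); auto.
Qed.

Lemma big_enum_ord (A : zmodType) n (F : 'I_n -> A) :
  \sum_(k <- enum 'I_n) F k = \sum_(k < n) F k.
Proof. by rewrite enumT. Qed.

Section Proj.
Variables (R : nzRingType) (C : zmodType) (lC : R -> C -> C) (rC : C -> R -> C)
  (Delta : C -> seq (C * C)) (eps : C -> R).
Hypothesis HC : is_coring lC rC Delta eps.
Variables (I : Type) (D : I -> C -> Prop).
Hypothesis HDcomod : forall i, left_subcomod lC rC Delta (D i).
Hypothesis HDsum : direct_sum D.

Lemma D0 i : D i 0.
Proof. by case: (HDcomod i) => [[]]. Qed.
Lemma DD i x y : D i x -> D i y -> D i (x + y).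
Proof. by case: (HDcomod i) => [[_ H _ _] _]; exact: H. Qed.
Lemma DN i x : D i x -> D i (- x).
Proof. by case: (HDcomod i) => [[_ _ H _] _]; exact: H. Qed.
Lemma DlC i r x : D i x -> D i (lC r x).
Proof. by case: (HDcomod i) => [[_ _ _ H] _]; exact: H. Qed.
Lemma D_sum i (T : Type) (s : seq T) F :
  (forall x, List.In x s -> D i (F x)) -> D i (\sum_(x <- s) F x).
Proof.
elim: s => [|a s IH] H; first by rewrite big_nil; exact: D0.
by rewrite big_cons; apply: DD; [apply: H; left|apply: IH => x Hx; apply: H; right].
Qed.

Definition dec_ok (c : C) (s : seq (I * C)) :=
  (forall q, List.In q s -> D q.1 q.2) /\ c = \sum_(q <- s) q.2.

Lemma dec_ex c : exists s, dec_ok c s.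
Proof.
case: HDsum => [Hex _]; case: (Hex c) => n [ix [xs [Hx ->]]].
exists [seq (ix k, xs k) | k <- enum 'I_n]; split.
- by move=> q Hq; case: (In_map Hq) => k [<- _] /=; exact: Hx.
- by rewrite big_map big_enum_ord.
Qed.

Definition dec c := proj1_sig (constructive_indefinite_description _ (dec_ex c)).
Lemma decP c : dec_ok c (dec c).
Proof. exact: (proj2_sig (constructive_indefinite_description _ (dec_ex c))). Qed.

Definition isi (i : I) (q : I * C) : bool :=
  if excluded_middle_informative (q.1 = i) then true else false.
Definition sel i q : C := if isi i q then q.2 else 0.
Lemma sel_eq i q : q.1 = i -> sel i q = q.2.
Proof. by rewrite /sel /isi; case: excluded_middle_informative. Qed.
Lemma sel_neq i q : q.1 <> i -> sel i q = 0.
Proof. by rewrite /sel /isi; case: excluded_middle_informative. Qed.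
Lemma isi_neq i q : ~~ isi i q -> q.1 <> i.
Proof. by rewrite /isi; case: excluded_middle_informative. Qed.

Definition pr i c := \sum_(q <- dec c) sel i q.

Lemma seq_fam (P : I * C -> Prop) (s : seq (I * C)) :
  (forall q, List.In q s -> P q) ->
  exists n (ix : 'I_n -> I) (xs : 'I_n -> C),
    (forall k, P (ix k, xs k)) /\ \sum_(q <- s) q.2 = \sum_(k < n) xs k.
Proof.
elim: s => [|[a x] s IH] H.
- have H0 : forall k : 'I_0, False by case.
  exists 0%N, (fun k => False_rect _ (H0 k)), (fun _ => 0); split.
  + by move=> k; case: (H0 k).
  + by rewrite big_nil big_ord0.
- case: IH => [q Hq|n [ix [xs [Hk Hs]]]]; first by apply: H; right.
  exists n.+1, (fun k => if unlift ord0 k is Some k' then ix k' else a),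
    (fun k => if unlift ord0 k is Some k' then xs k' else x); split.
  + by move=> k; case: (unlift ord0 k) => [k'|] //; apply: H; left.
  + rewrite big_cons big_ord_recl unlift_none Hs /=; congr (_ + _).
    by apply: eq_bigr => k _; rewrite liftK.
Qed.

Lemma uniq_seq i d s : (forall q, List.In q s -> q.1 <> i /\ D q.1 q.2) ->
  D i d -> d = \sum_(q <- s) q.2 -> d = 0.
Proof.
move=> Hs Hd Hds.
case: (seq_fam Hs) => n [ix [xs [Hk Hsum]]].
case: HDsum => _ Hu.
apply: (Hu i d n ix xs) => //; [by move=> k; case: (Hk k)|by move=> k; case: (Hk k)|].
by rewrite Hds Hsum.
Qed.

Lemma sum_split (t : seq (I * C)) i :
  \sum_(q <- t) q.2 = \sum_(q <- t) sel i q + \sum_(q <- t | ~~ isi i q) q.2.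
Proof.
rewrite [X in _ = _ + X]big_mkcond -big_split /=; apply: eq_bigr => q _.
by rewrite /sel; case: isi; rewrite ?addr0 ?add0r.
Qed.

Lemma sel_D i q : D q.1 q.2 -> D i (sel i q).
Proof.
move=> H; case: (excluded_middle_informative (q.1 = i)) => Hq.
  by rewrite sel_eq // -Hq.
by rewrite sel_neq //; exact: D0.
Qed.

Lemma pr_dec i c s : dec_ok c s -> pr i c = \sum_(q <- s) sel i q.
Proof.
move=> [Hs Hc]; have [Hs0 Hc0] := decP c.
set d := pr i c - \sum_(q <- s) sel i q.
have Hd : D i d.
  apply: DD; [apply: D_sum => q Hq; apply: sel_D; exact: Hs0|].
  apply: DN; apply: D_sum => q Hq; apply: sel_D; exact: Hs.
set t := [seq q <- s | ~~ isi i q] ++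
         [seq (q.1, - q.2) | q <- [seq q <- dec c | ~~ isi i q]].
have Hdt : d = \sum_(q <- t) q.2.
  rewrite /t big_cat big_map /= !big_filter sumrN.
  have E1 := sum_split s i; have E2 := sum_split (dec c) i.
  rewrite -Hc in E1; rewrite -Hc0 in E2.
  rewrite /d /pr.
  have -> : \sum_(q <- dec c) sel i q = c - \sum_(q <- dec c | ~~ isi i q) q.2.
    by apply/eqP; rewrite eq_sym subr_eq -E2.
  have -> : \sum_(q <- s) sel i q = c - \sum_(q <- s | ~~ isi i q) q.2.
    by apply/eqP; rewrite eq_sym subr_eq -E1.
  by rewrite opprB addrC addrA addrC !addrA addNr add0r.
have Ht : forall q, List.In q t -> q.1 <> i /\ D q.1 q.2.
  move=> q Hqt; case: (List.in_app_or _ _ _ Hqt) => H.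
  - by case: (In_filter H) => Hq Hi; split; [exact: isi_neq|exact: Hs].
  - case: (In_map H) => q0 [<- H']; case: (In_filter H') => Hq Hi.
    by split; [exact: isi_neq|rewrite /=; apply: DN; exact: Hs0].
have := uniq_seq Ht Hd Hdt.
by move/eqP; rewrite subr_eq0 => /eqP.
Qed.

Lemma pr_in i y : D i y -> pr i y = y.
Proof.
move=> Hy; rewrite (@pr_dec i y [:: (i, y)]).
  by rewrite big_cons big_nil addr0 sel_eq.
split; last by rewrite big_cons big_nil addr0.
by move=> q [<-|].
Qed.

Lemma pr_out i j y : D j y -> j <> i -> pr i y = 0.
Proof.
move=> Hy Hji; rewrite (@pr_dec i y [:: (j, y)]).
  by rewrite big_cons big_nil addr0 sel_neq.
split; last by rewrite big_cons big_nil addr0.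
by move=> q [<-|].
Qed.

Lemma pr_add i c d : pr i (c + d) = pr i c + pr i d.
Proof.
have [Hs Hc] := decP c; have [Hs' Hd] := decP d.
rewrite (@pr_dec i (c + d) (dec c ++ dec d)) ?big_cat //.
split; last by rewrite big_cat -Hc -Hd.
by move=> q Hq; case: (List.in_app_or _ _ _ Hq) => H; [exact: Hs|exact: Hs'].
Qed.

Lemma pr_lC i r c : pr i (lC r c) = lC r (pr i c).
Proof.
have [Hs Hc] := decP c.
rewrite (@pr_dec i (lC r c) [seq (q.1, lC r q.2) | q <- dec c]).
  rewrite big_map /pr (lC_sum HC); apply: eq_bigr => q _.
  rewrite /sel /isi /=; case: excluded_middle_informative => //= _.
  by rewrite (lC_0 HC).
split.
- by move=> q Hq; case: (In_map Hq) => q0 [<- H] /=; apply: DlC; exact: Hs.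
- by rewrite big_map {1}Hc (lC_sum HC).
Qed.

Lemma pr_mem i c : D i (pr i c).
Proof.
have [Hs _] := decP c; apply: D_sum => q Hq; apply: sel_D; exact: Hs.
Qed.

Lemma pr_ldual i f : ldual lC f -> ldual lC (fun c => f (pr i c)).
Proof.
move=> Hf; split; first by move=> x y; rewrite pr_add (ld_add Hf).
by move=> r x; rewrite pr_lC (ld_lC Hf).
Qed.


Hypothesis Halpha : left_alpha_condition lC.
Hypothesis HDfg : forall i, fg_left lC (D i).

Lemma pr_N i x : pr i (- x) = - pr i x.
Proof. exact: (addN (pr_add i)). Qed.
Lemma pr_sum i (T : Type) (s : seq T) F :
  pr i (\sum_(x <- s) F x) = \sum_(x <- s) pr i (F x).
Proof. exact: (add_sum (pr_add i)). Qed.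

Lemma dual_basis i : exists n (gs : 'I_n -> C) (e : 'I_n -> C -> R),
  (forall k, ldual lC (e k)) /\
  (forall y, D i y -> y = \sum_(k < n) lC (e k y) (gs k)).
Proof.
case: (HDfg i) => n [gs [Hgs Hspan]].
pose L := ({ffun 'I_n -> R} * C)%type.
pose aL (r : R) (v : L) : L := ([ffun k => r * v.1 k], lC r v.2).
pose p (v : L) : C := \sum_(k < n) lC (v.1 k) (gs k) + (v.2 - pr i v.2).
have pairP : forall u w : L, u.1 = w.1 -> u.2 = w.2 -> u = w.
  by case=> ? ?; case=> ? ? /= -> ->.
have HaL : lmod_ax aL.
  split.
  - move=> r x y; apply: pairP => /=; last exact: (lC_add HC).
    by apply/ffunP => k; rewrite !ffunE mulrDr.
  - move=> r s x; apply: pairP => /=; last exact: (lC_addl HC).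
    by apply/ffunP => k; rewrite !ffunE mulrDl.
  - move=> r s x; apply: pairP => /=; last exact: (lC_mul HC).
    by apply/ffunP => k; rewrite !ffunE mulrA.
  - move=> x; apply: pairP => /=; last exact: (lC_1 HC).
    by apply/ffunP => k; rewrite !ffunE mul1r.
have Hp : lmorph aL lC p.
  split.
  - move=> x y; rewrite /p /=.
    have -> : \sum_(k < n) lC ((x.1 + y.1) k) (gs k) =
              \sum_(k < n) lC (x.1 k) (gs k) + \sum_(k < n) lC (y.1 k) (gs k).
      by rewrite -big_split; apply: eq_bigr => k _; rewrite ffunE (lC_addl HC).
    rewrite pr_add opprD.
    set a := \sum_(k < n) _; set b := \sum_(k < n) _.
    have E : x.2 + y.2 + (- pr i x.2 - pr i y.2) = (x.2 - pr i x.2) + (y.2 - pr i y.2).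
      by rewrite addrACA.
    by rewrite E addrACA.
  - move=> r x; rewrite /p /= pr_lC (lC_add HC) (lC_add HC) (lC_N HC) (lC_sum HC); congr (_ + _).
    by rewrite (lC_sum HC); apply: eq_bigr => k _; rewrite ffunE (lC_mul HC).
have Hsurj : forall y, exists x, p x = y.
  move=> y; case: (Hspan (pr i y) (pr_mem i y)) => rs Hrs.
  exists ([ffun k => rs k], y); rewrite /p /=.
  have -> : \sum_(k < n) lC ([ffun k => rs k] k) (gs k) = pr i y.
    by rewrite Hrs; apply: eq_bigr => k _; rewrite ffunE.
  by rewrite addrC subrK.
have Hg : lmorph lC lC (pr i) by split; [exact: pr_add|exact: pr_lC].
have HlL : lmod_ax lC by exact: lmod_lC HC.
case: (Halpha HaL HlL Hp Hsurj Hg [seq gs k | k <- enum 'I_n]) => h [[Hh1 Hh2] HhF].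
exists n, gs, (fun k y => (h y).1 k); split.
  move=> k; split.
  - by move=> x y; rewrite Hh1 /= ffunE.
  - by move=> r x; rewrite Hh2 /= ffunE.
move=> y Hy.
have Hph : p (h y) = y.
  case: (Hspan y Hy) => rs ->.
  rewrite (add_sum (fun x y => _ : p (h (x + y)) = p (h x) + p (h y))); last first.
    by move=> x z; rewrite Hh1 (proj1 Hp).
  apply: eq_bigr => k _.
  rewrite Hh2 (proj2 Hp) HhF ?pr_in //.
  by rewrite map_f // mem_enum.
have Hpr : forall v, pr i (p v) = \sum_(k < n) lC (v.1 k) (gs k).
  move=> v; rewrite /p pr_add pr_sum pr_add pr_N (pr_in (pr_mem i v.2)) subrr addr0.
  by apply: eq_bigr => k _; rewrite pr_lC pr_in.
by rewrite -{1}(pr_in Hy) -{1}Hph Hpr.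
Qed.


Lemma sum_In (T : Type) (A : zmodType) (s : seq T) (F G : T -> A) :
  (forall x, List.In x s -> F x = G x) -> \sum_(x <- s) F x = \sum_(x <- s) G x.
Proof.
elim: s => [|a s IH] H; first by rewrite !big_nil.
rewrite !big_cons H; last by left.
by rewrite IH // => x Hx; apply: H; right.
Qed.

Lemma dmul_pr_term i f h j y : ldual lC f -> ldual lC h -> D j y ->
  dmul rC Delta (fun c => f (pr i c)) h y = dmul rC Delta f h (sel i (j, y)).
Proof.
move=> Hf Hh Hy.
case: (HDcomod j) => _ /(_ y Hy) [m [xs [ys [Hys Ht]]]].
rewrite (dmul_tens HC (pr_ldual i Hf) (ld_add Hh) Ht) big_map.
case: (excluded_middle_informative (j = i)) => Hji.
- have -> : sel i (j, y) = y by exact: sel_eq.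
  rewrite (dmul_tens HC Hf (ld_add Hh) Ht) [in RHS]big_map.
  apply: eq_bigr => k _; rewrite /= pr_in //; rewrite -Hji; exact: Hys.
- have -> : sel i (j, y) = 0 by exact: sel_neq.
  rewrite (dmul_0 HC Hf (ld_add Hh)) big1 // => k _ /=.
  by rewrite (pr_out (Hys k) Hji) (ld_0 Hf) (rC_0 HC) (ld_0 Hh).
Qed.

Lemma rat_pr i f : ldual lC f -> rat_dual lC rC Delta eps (fun c => f (pr i c)).
Proof.
move=> Hf; have [n [gs [e [He Hb]]]] := dual_basis i.
split; first exact: pr_ldual.
exists n, (fun k c => e k (pr i c)),
  (fun k => \sum_(p <- Delta (gs k)) rC p.1 (f p.2)).
split; first by move=> k; exact: pr_ldual.
move=> h Hh c.
have -> : \sum_(k < n) dmul rC Delta (fun c0 => e k (pr i c0))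
     (Defs.iota eps (h (\sum_(p <- Delta (gs k)) rC p.1 (f p.2)))) c
     = dmul rC Delta f h (pr i c).
  rewrite [in RHS](Hb _ (pr_mem i c)) (dmul_sum HC Hf (ld_add Hh)).
  apply: eq_bigr => k _.
  by rewrite (dmul_iota HC _ (pr_ldual i (He k))) (dmul_lC HC Hf Hh) (ld_sum Hh).
have [Hs Hc] := decP c.
rewrite {1}Hc (dmul_sum HC (pr_ldual i Hf) (ld_add Hh)).
have -> : pr i c = \sum_(q <- dec c) sel i q by [].
rewrite (dmul_sum HC Hf (ld_add Hh)).
apply: sum_In => [[j y]] Hq.
exact: (dmul_pr_term _ Hf Hh (Hs _ Hq)).
Qed.

Lemma rat_zero : rat_dual lC rC Delta eps (fun _ => 0).
Proof.
have Z : ldual lC (fun _ : C => 0 : R).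
  by split=> [x y|r x]; rewrite ?addr0 ?mulr0.
split=> //.
exists 0%N, (fun _ _ => 0), (fun _ => 0); split=> // f Hf c.
rewrite big_ord0 /dmul big1 // => p _.
by rewrite (rC_0 HC) (ld_0 Hf).
Qed.

Lemma rat_add g1 g2 : rat_dual lC rC Delta eps g1 -> rat_dual lC rC Delta eps g2 ->
  rat_dual lC rC Delta eps (fun c => g1 c + g2 c).
Proof.
move=> [Hg1 [n1 [hs1 [cs1 [Hh1 E1]]]]] [Hg2 [n2 [hs2 [cs2 [Hh2 E2]]]]].
split.
  split=> [x y|r x].
  - by rewrite (ld_add Hg1) (ld_add Hg2) addrACA.
  - by rewrite (ld_lC Hg1) (ld_lC Hg2) mulrDr.
exists (n1 + n2)%N,
  (fun k => match split k with inl a => hs1 a | inr b => hs2 b end),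
  (fun k => match split k with inl a => cs1 a | inr b => cs2 b end).
split.
  by move=> k; case: (split k) => a; [exact: Hh1|exact: Hh2].
move=> f Hf c; rewrite big_split_ord /=.
have -> : dmul rC Delta (fun c => g1 c + g2 c) f c =
          dmul rC Delta g1 f c + dmul rC Delta g2 f c.
  by rewrite /dmul -big_split; apply: eq_bigr => p _; rewrite (rC_addr HC) (ld_add Hf).
rewrite (E1 f Hf c) (E2 f Hf c); congr (_ + _); apply: eq_bigr => k _.
- by rewrite (unsplitK (inl k : 'I_n1 + 'I_n2)).
- by rewrite (unsplitK (inr k : 'I_n1 + 'I_n2)).
Qed.

Lemma rat_sumJ f (L : seq I) : ldual lC f ->
  rat_dual lC rC Delta eps (fun c => \sum_(i <- L) f (pr i c)).
Proof.
move=> Hf; elim: L => [|a L IH].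
  have -> : (fun c => \sum_(i <- [::]) f (pr i c)) = (fun _ => 0).
    by apply: functional_extensionality => c; rewrite big_nil.
  exact: rat_zero.
have -> : (fun c => \sum_(i <- a :: L) f (pr i c)) =
          (fun c => f (pr a c) + \sum_(i <- L) f (pr i c)).
  by apply: functional_extensionality => c; rewrite big_cons.
by apply: rat_add => //; exact: rat_pr.
Qed.

Lemma nodup_ex (L : seq I) :
  exists L', List.NoDup L' /\ forall i, List.In i L -> List.In i L'.
Proof.
elim: L => [|a L [L' [Hnd HL]]]; first by exists [::]; split; [constructor|].
case: (excluded_middle_informative (List.In a L')) => Ha.
- by exists L'; split => // i [<-|Hi]; [exact: Ha|exact: HL].
- exists (a :: L'); split; first by constructor.
  by move=> i [<-|Hi]; [left|right; exact: HL].
Qed.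

Lemma sel_zero (L : seq I) q : (forall i, List.In i L -> q.1 <> i) ->
  \sum_(i <- L) sel i q = 0.
Proof.
elim: L => [|a L IH] H; first by rewrite big_nil.
rewrite big_cons sel_neq ?add0r; last by apply: H; left.
by apply: IH => i Hi; apply: H; right.
Qed.

Lemma sel_sumJ (L : seq I) q : List.NoDup L -> List.In q.1 L ->
  \sum_(i <- L) sel i q = q.2.
Proof.
elim: L => [|a L IH] Hnd //= Hin.
case/List.NoDup_cons_iff: Hnd => Ha Hnd'.
rewrite big_cons; case: Hin => [Heq|Hin].
- rewrite sel_eq -?Heq // sel_zero ?addr0 // => i Hi Hqi; apply: Ha.
  by rewrite Heq Hqi.
- have Hqa : q.1 <> a by move=> E; apply: Ha; rewrite -E.
  by rewrite sel_neq // add0r IH.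
Qed.

Lemma In_map_f (A B : Type) (f : A -> B) x (l : seq A) :
  List.In x l -> List.In (f x) (map f l).
Proof. by elim: l => [|a l IH] //= [->|H]; [left|right; exact: IH]. Qed.

Lemma In_flat (F : seq C) x q : x \in F -> List.In q (dec x) ->
  List.In q.1 (flatten [seq map fst (dec y) | y <- F]).
Proof.
elim: F => [|y F IH] //=; rewrite in_cons => /orP [/eqP ->|Hx] Hq;
  apply: List.in_or_app; [left; exact: In_map_f|right; exact: IH].
Qed.

Lemma dense : rat_dense lC rC Delta eps.
Proof.
move=> f Hf F.
have [L' [Hnd HL]] := nodup_ex (flatten [seq map fst (dec y) | y <- F]).
exists (fun c => \sum_(i <- L') f (pr i c)); split; first exact: rat_sumJ.
move=> x Hx; rewrite -(ld_sum Hf); congr (f _).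
have [Hs Hc] := decP x.
transitivity (\sum_(q <- dec x) q.2); last by rewrite -Hc.
rewrite /pr exchange_big /=.
apply: sum_In => q Hq; apply: sel_sumJ => //; apply: HL; exact: In_flat Hx Hq.
Qed.

End Proj.

Section Exact.
Variables (R : nzRingType) (C : zmodType) (lC : R -> C -> C) (rC : C -> R -> C)
  (Delta : C -> seq (C * C)) (eps : C -> R).
Hypothesis HC : is_coring lC rC Delta eps.

Lemma ldual_sum (T : Type) (s : seq T) (F : T -> C -> R) :
  (forall k, ldual lC (F k)) -> ldual lC (fun c => \sum_(k <- s) F k c).
Proof.
move=> HF; split=> [x y|r x].
- by rewrite -big_split; apply: eq_bigr => k _; exact: (ld_add (HF k)).
- by rewrite mulr_sumr; apply: eq_bigr => k _; exact: (ld_lC (HF k)).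
Qed.

Lemma act_sum (M : zmodType) (act : M -> (C -> R) -> M) :
  rdmod_ax lC rC Delta eps act -> forall m n (F : 'I_n -> C -> R),
  (forall k, ldual lC (F k)) ->
  act m (fun c => \sum_(k < n) F k c) = \sum_(k < n) act m (F k).
Proof.
move=> [_ Hadd _ _] m; elim=> [|n IH] F HF.
  have -> : (fun c => \sum_(k < 0) F k c) = (fun _ => 0).
    by apply: functional_extensionality => c; rewrite big_ord0.
  rewrite big_ord0.
  have Z : ldual lC (fun _ : C => 0 : R).
    by split=> [x y|r x]; rewrite ?addr0 ?mulr0.
  have := Hadd m _ _ Z Z.
  have -> : (fun _ : C => (0 : R) + 0) = (fun _ => 0).
    by apply: functional_extensionality => c; rewrite addr0.
  move=> E; apply/(addrI (act m (fun _ => 0))).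
  by rewrite addr0 -E.
have -> : (fun c => \sum_(k < n.+1) F k c) =
   (fun c => \sum_(k < n) F (widen_ord (leqnSn n) k) c + F ord_max c).
  by apply: functional_extensionality => c; rewrite big_ord_recr.
have L1 : ldual lC (fun c => \sum_(k < n) F (widen_ord (leqnSn n) k) c).
  exact: (@ldual_sum _ _ (fun k => F (widen_ord (leqnSn n) k)) (fun k => HF _)).
rewrite (Hadd m _ _ L1 (HF ord_max)).
by rewrite IH // big_ord_recr.
Qed.

Lemma exact_of_dense : rat_dense lC rC Delta eps -> rat_exact lC rC Delta eps.
Proof.
move=> Hd M1 M2 M3 a1 a2 a3 H1 H2 H3 u v Hu Hv Hex y [n [ys [cs Hy]]] Hvy.
have [x Hx] := (proj1 (Hex y)) Hvy.
have [g [[Hg [m [hs [cs2 [Hhs Hgf]]]]] Hgeq]] :=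
  Hd eps (eps_ldual HC) [seq cs k | k <- enum 'I_n].
exists (a1 x g); split.
- exists m, (fun k => a1 x (hs k)), cs2 => f Hf.
  have [_ _ Hmul _] := H1.
  rewrite -(Hmul x g f Hg Hf).
  have -> : dmul rC Delta g f =
     (fun c => \sum_(k < m) dmul rC Delta (hs k) (Defs.iota eps (f (cs2 k))) c).
    by apply: functional_extensionality => c; exact: Hgf.
  rewrite (act_sum H1); last first.
    by move=> k; apply: (dmul_ldual HC); [exact: Hhs|exact: (iota_ldual HC)].
  by apply: eq_bigr => k _; rewrite Hmul //; exact: (iota_ldual HC).
- rewrite (proj2 Hu x g Hg) Hx.
  case: H2 => _ _ _ Hone.
  transitivity (a2 y eps); last exact: Hone.
  rewrite (Hy g Hg) (Hy eps (eps_ldual HC)).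
  apply: eq_bigr => k _; rewrite Hgeq //.
  by rewrite map_f // mem_enum.
Qed.

End Exact.

Theorem corollary2p6 (R : nzRingType) (C : zmodType)
  (lC : R -> C -> C) (rC : C -> R -> C)
  (Delta : C -> seq (C * C)) (eps : C -> R)
  (HC : is_coring lC rC Delta eps)
  (Halpha : left_alpha_condition lC)
  (I : Type) (D : I -> C -> Prop)
  (HDcomod : forall i, left_subcomod lC rC Delta (D i))
  (HDfg : forall i, fg_left lC (D i))
  (HDsum : direct_sum D) :
  rat_dense lC rC Delta eps /\ rat_exact lC rC Delta eps.
Proof.
have Hd : rat_dense lC rC Delta eps by exact: (dense HC HDcomod HDsum Halpha HDfg).
by split; [exact: Hd|exact: exact_of_dense].
Qed.
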